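(* Let $S_{r,N}$ be an atomic exponential Puiseux semiring. Then for every positive integer $k$, the set $\mathcal{U}_k(S_{r,N})$ is an arithmetic sequence with difference $|\mathsf{n}(r)-\mathsf{d}(r)|$ (i.e., a set of consecutive terms of an arithmetic progression with that common difference).
   Context: $\mathbb{N}=\{0,1,2,\dots\}$. A numerical monoid $N$ is an additive submonoid of $\mathbb{N}$ with finite complement in $\mathbb{N}$. For $r\in\mathbb{Q}_{>0}$ write $r=\mathsf{n}(r)/\mathsf{d}(r)$ in lowest terms. The exponential Puiseux semiring $S_{r,N}$ is the additive submonoid of $\mathbb{Q}_{\ge0}$ generated by $\{r^k:k\in N\}$; if $r\in\mathbb{N}$ it equals $\mathbb{N}$; if $r\notin\mathbb{N}$ it is atomic iff $\mathsf{n}(r)>1$, with atoms $r^s$, $s\in N$. For an atomic monoid $M$ and a positive integer $k$, $\mathcal{U}_k(M)$ is the set of positive integers $m$ for which there exist atoms $a_1,\dots,a_k,a'_1,\dots,a'_m$ with $a_1+\cdots+a_k=a'_1+\cdots+a'_m$. *)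

(* Defs.v *)
From mathcomp Require Import all_boot all_order all_algebra.
Set Implicit Arguments. Unset Strict Implicit. Unset Printing Implicit Defensive.
Import Order.TTheory GRing.Theory Num.Theory.
Local Open Scope ring_scope.

Definition numerical_monoid (N : nat -> Prop) : Prop :=
  [/\ N 0%N,
      (forall a b, N a -> N b -> N (a + b)%N) &
      (exists B : nat, forall n, (B <= n)%N -> N n)].

Definition expPuiseux (r : rat) (N : nat -> Prop) (x : rat) : Prop :=
  exists s : seq nat, (forall k, k \in s -> N k) /\ x = \sum_(k <- s) r ^+ k.

Definition atom (M : rat -> Prop) (a : rat) : Prop :=
  [/\ M a, a != 0 &
      forall b c, M b -> M c -> a = b + c -> b = 0 \/ c = 0].

Definition atomic (M : rat -> Prop) : Prop :=
  forall x, M x -> x != 0 ->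
    exists s : seq rat, (forall a, a \in s -> atom M a) /\ x = \sum_(a <- s) a.

Definition Uk (M : rat -> Prop) (k : nat) (m : nat) : Prop :=
  (0 < m)%N /\
  exists s t : seq rat,
    [/\ size s = k, size t = m,
        (forall a, a \in s -> atom M a), (forall a, a \in t -> atom M a) &
        \sum_(a <- s) a = \sum_(a <- t) a].

Definition arith_seq (U : nat -> Prop) (d : nat) : Prop :=
  exists a : nat,
    (exists L : nat, forall m, U m <-> exists2 i, (i <= L)%N & m = (a + i * d)%N)
    \/ (forall m, U m <-> exists i, m = (a + i * d)%N).

(* Main.v *)
Require Import Defs.
From mathcomp Require Import all_boot all_order all_algebra zify.
From Stdlib Require Import Classical.
Set Implicit Arguments. Unset Strict Implicit. Unset Printing Implicit Defensive.

Definition RR (e : nat) (P : seq nat -> Prop) (x z : nat) : Prop :=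
 (exists j, z = x + j * e /\ forall i, i <= j -> exists w, P w /\ size w = x + i * e) \/
 (exists j, x = z + j * e /\ forall i, i <= j -> exists w, P w /\ size w = z + i * e).

Lemma RR_sym e P x z : RR e P x z -> RR e P z x.
Proof. by case=> H; [right|left]. Qed.

Lemma RR_ext e (P Q : seq nat -> Prop) x z : (forall w, P w -> Q w) -> RR e P x z -> RR e Q x z.
Proof.
move=> PQ [[j [Hj H]]|[j [Hj H]]]; [left|right]; exists j; split=> // i /H [w [Pw Sw]];
  by exists w; split=> //; apply: PQ.
Qed.

Lemma RR_cons e (P Q : seq nat -> Prop) c x z : (forall w, P w -> Q (c :: w)) ->
  RR e P x z -> RR e Q x.+1 z.+1.
Proof.
move=> PQ [[j [Hj H]]|[j [Hj H]]]; [left|right]; exists j; split; try lia;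
  move=> i /H [w [Pw Sw]]; exists (c :: w); (split; first exact: PQ); rewrite /= Sw; lia.
Qed.

Lemma RR_refl e (P : seq nat -> Prop) x : (exists w, P w /\ size w = x) -> RR e P x x.
Proof.
move=> [w [Pw Sw]]; left; exists 0; split; first lia.
by move=> i; rewrite leqn0 => /eqP ->; exists w; split=> //; rewrite Sw mul0n addn0.
Qed.

Lemma RR_step e (P : seq nat -> Prop) x y z :
  (exists w, P w /\ size w = x) -> (exists w, P w /\ size w = z) ->
  (y = x + e \/ x = y + e) -> RR e P y z -> RR e P x z.
Proof.
move=> [wx [Px Sx]] [wz [Pz Sz]] He [[j [Hj H]]|[j [Hj H]]]; case: He => He.
- left; exists j.+1; split; first by rewrite mulSn; lia.
  case=> [|i] Hi; first by exists wx; rewrite mul0n addn0.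
  have [w [Pw Sw]] := H i Hi; exists w; split=> //; rewrite Sw mulSn; lia.
- case: j Hj H => [|j] Hj H.
  + right; exists 1; split; first lia.
    case=> [|[|i]] Hi //; first by exists wz; split=> //; lia.
    by exists wx; split=> //; lia.
  + left; exists j; split; first by move: Hj; rewrite mulSn; lia.
    move=> i Hi; have [w [Pw Sw]] := H i.+1 Hi; exists w; split=> //; rewrite Sw mulSn; lia.
- case: j Hj H => [|j] Hj H.
  + left; exists 1; split; first lia.
    case=> [|[|i]] Hi //; first by exists wx; split=> //; lia.
    by exists wz; split=> //; lia.
  + right; exists j; split; first by move: Hj; rewrite mulSn; lia.
    move=> i Hi; apply: H; lia.
- right; exists j.+1; split; first by rewrite mulSn; lia.
  move=> i Hi; case: (ltnP i j.+1) => Hij.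
  + by apply: H.
  + have -> : i = j.+1 by lia.
    by exists wx; split=> //; rewrite mulSn; lia.
Qed.
Definition V (n d M : nat) (s : seq nat) : nat := \sum_(x <- s) n ^ x * d ^ (M - x).
Definition mu (d M : nat) (s : seq nat) : nat := \sum_(x <- s) d.+1 ^ (M - x).
Definition rng (lo M : nat) (s : seq nat) := all (fun x => lo <= x <= M) s.

Lemma V_nil n d M : V n d M [::] = 0. Proof. by rewrite /V big_nil. Qed.
Lemma V_cons n d M x s : V n d M (x :: s) = n ^ x * d ^ (M - x) + V n d M s.
Proof. by rewrite /V big_cons. Qed.
Lemma V_cat n d M s t : V n d M (s ++ t) = V n d M s + V n d M t.
Proof. by rewrite /V big_cat. Qed.
Lemma V_nseq n d M k x : V n d M (nseq k x) = k * (n ^ x * d ^ (M - x)).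
Proof. by elim: k => [|k IH]; rewrite ?V_nil ?mul0n //= V_cons IH mulSn. Qed.
Lemma V_perm n d M s t : perm_eq s t -> V n d M s = V n d M t.
Proof. by move=> H; rewrite /V (perm_big _ H). Qed.
Lemma mu_cons d M x s : mu d M (x :: s) = d.+1 ^ (M - x) + mu d M s.
Proof. by rewrite /mu big_cons. Qed.
Lemma mu_cat d M s t : mu d M (s ++ t) = mu d M s + mu d M t.
Proof. by rewrite /mu big_cat. Qed.
Lemma mu_nseq d M k x : mu d M (nseq k x) = k * d.+1 ^ (M - x).
Proof. by elim: k => [|k IH]; rewrite ?mul0n /mu ?big_nil //= big_cons -/(mu _ _ _) IH mulSn. Qed.
Lemma mu_perm d M s t : perm_eq s t -> mu d M s = mu d M t.
Proof. by move=> H; rewrite /mu (perm_big _ H). Qed.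

Lemma V_eq0 n d M s : 0 < n -> 0 < d -> V n d M s = 0 -> s = [::].
Proof.
move=> n0 d0; case: s => [|x s] //; rewrite V_cons => H.
have : 0 < n ^ x * d ^ (M - x) by rewrite muln_gt0 !expn_gt0 n0 d0.
lia.
Qed.

Lemma V_split n d M (a : nat) (s : seq nat) :
  V n d M s = count_mem a s * (n ^ a * d ^ (M - a)) + V n d M (filter (predC1 a) s).
Proof.
elim: s => [|x s IH]; first by rewrite V_nil.
rewrite /= V_cons IH; case: eqP => [->|ne] /=; first by rewrite mulSn addnA.
by rewrite add0n V_cons; lia.
Qed.

Lemma V_dvd n d M a s : all (fun x => a < x) s -> n ^ a.+1 %| V n d M s.
Proof.
elim: s => [|x s IH] /=; first by rewrite V_nil dvdn0.
move=> /andP [ax /IH H]; rewrite V_cons dvdn_add //.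
by apply: dvdn_mulr; apply: dvdn_exp2l.
Qed.

Lemma min_dvd n d M (a : nat) (u v : seq nat) : 0 < n -> coprime n d -> a \notin v ->
  all (fun x => a <= x) (u ++ v) -> V n d M u = V n d M v -> n %| count_mem a u.
Proof.
move=> n0 cnd av; rewrite all_cat => /andP [au bv] E.
have Hv : n ^ a.+1 %| V n d M v.
  apply: V_dvd; apply/allP => x xv; have := allP bv x xv.
  by rewrite leq_eqVlt => /orP [/eqP ax|//]; move: av; rewrite ax xv.
have Hf : n ^ a.+1 %| V n d M (filter (predC1 a) u).
  apply: V_dvd; apply/allP => x; rewrite mem_filter => /andP [/= xa xu].
  by have := allP au x xu; rewrite leq_eqVlt eq_sym (negbTE xa).
move: Hv; rewrite -E (V_split _ _ _ a) dvdn_addl // expnSr mulnCA mulnC.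
rewrite mulnC dvdn_pmul2l ?expn_gt0 ?n0 //.
by rewrite Gauss_dvdl // coprimeXr.
Qed.

Lemma mu_split d M (a : nat) (s : seq nat) :
  mu d M s = count_mem a s * d.+1 ^ (M - a) + mu d M (filter (predC1 a) s).
Proof.
elim: s => [|x s IH]; first by rewrite /mu big_nil.
rewrite /= mu_cons IH; case: eqP => [->|ne] /=; first by rewrite mulSn addnA.
by rewrite add0n mu_cons; lia.
Qed.

Lemma size_split a (s : seq nat) : count_mem a s + size (filter (predC1 a) s) = size s.
Proof. by elim: s => [|x s IH] //=; case: eqP => /= _; rewrite -IH ?addnS. Qed.

Lemma merge n d M lo (a : nat) (u : seq nat) : 0 < n -> a < M -> lo <= a -> n <= count_mem a u -> rng lo M u ->
 exists u1 : seq nat,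
 [/\ V n d M u1 = V n d M u, size u1 + n = size u + d, mu d M u1 < mu d M u, rng lo M u1
   & d <= count_mem a.+1 u1].
Proof.
move=> n0 aM loa nc ru.
set u1 := nseq d a.+1 ++ nseq (count_mem a u - n) a ++ filter (predC1 a) u.
exists u1.
have [k Hk] : exists k, M - a = k.+1 by exists (M - a.+1); lia.
have Hk' : M - a.+1 = k by lia.
split.
- rewrite /u1 !V_cat !V_nseq (V_split _ _ _ a u) Hk Hk' !expnS.
  set c := count_mem a u; set F := V _ _ _ _; have nc' : n <= c := nc; clearbody c.
  have -> : c = (c - n) + n by lia.
  rewrite addnK; nia.
- rewrite /u1 !size_cat !size_nseq -(size_split a u); set c := count_mem a u; have nc' : n <= c := nc; clearbody c; set f1 := size _; try (set f2 := size _; have -> : f2 = f1 by []); clearbody f1; lia.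
- rewrite /u1 !mu_cat !mu_nseq (mu_split _ _ a u) Hk Hk' expnS.
  set c := count_mem a u; set F := mu _ _ _; have nc' : n <= c := nc; clearbody c; set p := d.+1 ^ k.
  have p0 : 0 < p by rewrite expn_gt0.
  have -> : c = (c - n) + n by lia.
  rewrite addnK; nia.
- rewrite /rng /u1 !all_cat; apply/and3P; split.
  + by apply/allP => x /nseqP [-> _]; apply/andP; split; lia.
  + by apply/allP => x /nseqP [-> _]; apply/andP; split; lia.
  + by apply/allP => x; rewrite mem_filter => /andP [_ xu]; apply: (allP ru).
- by rewrite /u1 !count_cat count_nseq /= eqxx mul1n leq_addr.
Qed.

Lemma seq_min (s : seq nat) : s != [::] -> exists2 a, a \in s & all (fun x => a <= x) s.
Proof.
elim: s => [|x s IH] // _; case: (eqVneq s [::]) => [->|ne].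
  by exists x; rewrite ?mem_seq1 //= leqnn.
have [b bs ball] := IH ne; case: (leqP x b) => xb.
- exists x; rewrite ?mem_head //= leqnn /=; apply/allP => y ys.
  by apply: leq_trans xb (allP ball y ys).
- exists b; rewrite ?in_cons ?bs ?orbT //= ball andbT; lia.
Qed.

Lemma rng_sub lo M (s t : seq nat) : {subset t <= s} -> rng lo M s -> rng lo M t.
Proof. by move=> st /allP H; apply/allP => x /st /H. Qed.

Lemma core n d M lo e : 0 < n -> 0 < d -> coprime n d ->
  (forall x y, x + n = y + d -> x = y + e \/ y = x + e) ->
  forall u v : seq nat, rng lo M u -> rng lo M v -> V n d M u = V n d M v ->
  RR e (fun w => rng lo M w /\ V n d M w = V n d M u) (size u) (size v).
Proof.
move=> n0 d0 cnd He u v.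
have [m Hm] : exists m, mu d M u + mu d M v <= m by exists (mu d M u + mu d M v).
elim: m u v Hm => [|m IH] u v Hm ru rv E.
  case: u Hm ru E => [|x u]; last by rewrite mu_cons; have := expn_gt0 d.+1 (M - x); lia.
  case: v rv => [|y v]; last by rewrite mu_cons; have := expn_gt0 d.+1 (M - y); lia.
  by move=> _ _ _ _; apply: RR_refl; exists [::].
case: (eqVneq u [::]) => [u0|un0].
  have v0 : v = [::] by apply: (V_eq0 (M:=M) n0 d0); rewrite -E u0 V_nil.
  by rewrite u0 v0; apply: RR_refl; exists [::]; split; rewrite ?u0.
case: (boolP (has (fun x => x \in v) u)) => [/hasP [c cu cv]|nh].
- have pu := perm_to_rem cu; have pv := perm_to_rem cv.
  have Eu := V_perm n d M pu; have Ev := V_perm n d M pv.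
  have Mu := mu_perm d M pu; have Mv := mu_perm d M pv.
  rewrite V_cons in Eu; rewrite V_cons in Ev; rewrite mu_cons in Mu; rewrite mu_cons in Mv.
  have crng : lo <= c <= M by apply: (allP ru).
  have := IH (rem c u) (rem c v).
  have p0 : 0 < d.+1 ^ (M - c) by rewrite expn_gt0.
  move=> /(_ ltac:(lia)) /(_ (rng_sub (mem_rem (s:=u)) ru) (rng_sub (mem_rem (s:=v)) rv)).
  move=> /(_ ltac:(lia)) H.
  rewrite (perm_size pu) (perm_size pv); apply: (@RR_cons e _ _ c _ _ _ H) => w [rw Vw].
  split; first by apply/andP; split.
  by rewrite V_cons Vw Eu.
- have vn0 : v != [::].
    by apply/eqP => v0; move: un0; rewrite (V_eq0 (M:=M) n0 d0 (s:=u)) // E v0 V_nil.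
  have [a auv amin] := seq_min (s := u ++ v) ltac:(by rewrite -size_eq0 size_cat addn_eq0 size_eq0 negb_and un0).
  have nc : forall x, x \in u -> x \in v -> False.
    by move=> x xu xv; move/hasP: nh; apply; exists x.
  have ra : lo <= a <= M.
    by move: auv; rewrite mem_cat => /orP [/(allP ru)|/(allP rv)].
  move: auv; rewrite mem_cat => /orP [au|av].
  + have anv : a \notin v by apply/negP => /(nc a au).
    have aM : a < M.
      have [y yv] : exists y, y \in v by case: (v) vn0 => [|y ?] //; exists y; rewrite mem_head.
      have /andP [_ yM] := allP rv y yv.
      have ay := allP amin y ltac:(by rewrite mem_cat yv orbT).
      have ya : y != a by apply/eqP => ya; move: anv; rewrite -ya yv.
      by move: ya; rewrite neq_ltn => /orP [|]; lia.
    have cd := min_dvd n0 cnd anv amin E.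
    have cp : 0 < count_mem a u by rewrite -has_count has_pred1.
    have nle := dvdn_leq cp cd.
    have [u1 [V1 S1 M1 R1 _]] := merge d n0 aM (proj1 (andP ra)) nle ru.
    have H := IH u1 v ltac:(lia) R1 rv ltac:(by rewrite V1).
    apply: (RR_step (y := size u1)).
    * by exists u; split.
    * by exists v; split.
    * by apply: He.
    * by apply: RR_ext H => w [rw]; rewrite V1.
  + have anu : a \notin u by apply/negP => au; apply: (nc a au).
    have aM : a < M.
      have [y yv] : exists y, y \in u by case: (u) un0 => [|y ?] //; exists y; rewrite mem_head.
      have /andP [_ yM] := allP ru y yv.
      have ay := allP amin y ltac:(by rewrite mem_cat yv).
      have ya : y != a by apply/eqP => ya; move: anu; rewrite -ya yv.
      by move: ya; rewrite neq_ltn => /orP [|]; lia.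
    have amin' : all (fun x => a <= x) (v ++ u) by move: amin; rewrite !all_cat andbC.
    have cd := min_dvd n0 cnd anu amin' (esym E).
    have cp : 0 < count_mem a v by rewrite -has_count has_pred1.
    have nle := dvdn_leq cp cd.
    have [v1 [V1 S1 M1 R1 _]] := merge d n0 aM (proj1 (andP ra)) nle rv.
    have H := IH v1 u ltac:(lia) R1 ru ltac:(by rewrite V1).
    apply: RR_sym; apply: (RR_step (y := size v1)).
    * by exists v; split.
    * by exists u; split.
    * by apply: He.
    * by apply: RR_ext H => w [rw]; rewrite V1 E.
Qed.

Lemma atom_nat n d M (s : nat) (v : seq nat) : 1 < n -> 1 < d -> coprime n d -> s <= M ->
  rng 0 M v -> V n d M v = V n d M [:: s] -> v = [:: s].
Proof.
move=> n1 d1 cnd sM.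
have n0 : 0 < n by lia.
have d0 : 0 < d by lia.
have [m Hm] : exists m, mu d M v <= m by exists (mu d M v).
elim: m v Hm => [|m IH] v Hm rv E.
  case: v Hm rv E => [|x v]; last by rewrite mu_cons; have := expn_gt0 d.+1 (M - x); lia.
  move=> _ _; rewrite V_nil V_cons V_nil addn0 => E.
  by have := expn_gt0 n s; have := expn_gt0 d (M - s); nia.
case: (boolP (s \in v)) => [sv|snv].
  have pv := perm_to_rem sv; have Ev := V_perm n d M pv.
  rewrite V_cons E V_cons V_nil addn0 in Ev.
  have r0 : rem s v = [::] by apply: (V_eq0 (M:=M) n0 d0); lia.
  rewrite r0 in pv; have := perm_size pv; case: (v) sv => [|x [|y w]] //=.
  by rewrite mem_seq1 => /eqP ->.
have vn0 : v != [::] by apply/eqP => v0; move: E; rewrite v0 V_nil V_cons; have := expn_gt0 n s; have := expn_gt0 d (M - s); nia.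
have [a auv amin] := seq_min (s := [:: s] ++ v) ltac:(by []).
move: auv; rewrite mem_cat => /orP [as'|av].
  move: as'; rewrite mem_seq1 => /eqP as'; subst a.
  have := min_dvd n0 cnd snv amin (esym E); rewrite /= eqxx /= => /dvdn_leq; lia.
have anv : a \notin [:: s] by rewrite mem_seq1; apply/eqP => as'; move: snv; rewrite -as' av.
have aM : a < M.
  have := allP amin s (mem_head _ _); move: anv; rewrite mem_seq1 neq_ltn => /orP [|]; lia.
have amin' : all (fun x => a <= x) (v ++ [:: s]) by move: amin; rewrite !all_cat andbC.
have cd := min_dvd n0 cnd anv amin' E.
have cp : 0 < count_mem a v by rewrite -has_count has_pred1.
have nle := dvdn_leq cp cd.
have [v1 [V1 S1 M1 R1 C1]] := merge d n0 aM (leq0n a) nle rv.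
have := IH v1 ltac:(lia) R1 ltac:(by rewrite V1).
move=> v1s; move: C1; rewrite v1s /=; case: eqP => _ /=; lia.
Qed.

Definition RS (e : nat) (Q : nat -> Prop) (x z : nat) : Prop :=
 (exists j, z = x + j * e /\ forall i, i <= j -> Q (x + i * e)) \/
 (exists j, x = z + j * e /\ forall i, i <= j -> Q (z + i * e)).

Lemma ex_min_nat (P : nat -> Prop) : (exists m, P m) -> exists a, P a /\ forall m, P m -> a <= m.
Proof.
move=> [m0 Pm0]; elim: m0 {-2}m0 (leqnn m0) Pm0 => [|b IH] m0 Hb Pm0.
  by exists m0; split=> // m _; lia.
case: (classic (exists m, m < m0 /\ P m)) => [[m [Hm Pm]]|nex].
  by apply: (IH m) => //; lia.
exists m0; split=> // m Pm; case: (leqP m0 m) => // Hm; exfalso; apply: nex; by exists m.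
Qed.

Lemma ex_max_nat (I : nat -> Prop) : I 0 -> (exists L, forall i, I i -> i <= L) ->
  exists L, I L /\ forall i, I i -> i <= L.
Proof.
move=> I0 [L HL]; elim: L HL => [|L IH] HL.
  by exists 0; split.
case: (classic (I L.+1)) => [IL|nIL]; first by exists L.+1.
apply: IH => i Ii; have := HL i Ii; rewrite leq_eqVlt => /orP [/eqP ei|//].
by subst i.
Qed.

Lemma arith_of (U : nat -> Prop) k e : U k -> (forall m, U m -> RS e U k m) -> arith_seq U e.
Proof.
move=> Uk HU.
case: (posnP e) => [e0|epos].
  exists k; left; exists 0 => m; split.
  - move=> /HU [[j [Hj _]]|[j [Hj _]]]; exists 0; rewrite // e0 muln0 addn0; move: Hj;
    by rewrite e0 muln0 addn0.
  - by move=> [i _ ->]; rewrite e0 muln0 addn0.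
have [a [Ua amin]] := ex_min_nat (ex_intro _ k Uk).
have [j0 [Hj0 Ha]] : exists j0, k = a + j0 * e /\ forall i, i <= j0 -> U (a + i * e).
  case: (HU a Ua) => [[j [Hj H]]|[j [Hj H]]]; last by exists j.
  have ak := amin k Uk.
  have ej : j * e = 0 by lia.
  exists 0; split; first lia.
  by move=> i; rewrite leqn0 => /eqP ->; rewrite mul0n addn0.
have C : forall m, U m -> exists i, m = a + i * e /\ forall i', i' <= i -> U (a + i' * e).
  move=> m /HU [[j [Hj H]]|[j [Hj H]]].
  - exists (j0 + j); split; first by rewrite mulnDl; lia.
    move=> i' Hi'; case: (leqP i' j0) => Hij; first exact: Ha.
    have := H (i' - j0) ltac:(lia); rewrite mulnBl; congr U.
    have : j0 * e <= i' * e by rewrite leq_mul2r; lia.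
    lia.
  - have Um : U m by have := H 0 (leq0n j); rewrite mul0n addn0.
    have am := amin m Um.
    have jj : j <= j0.
      case: (leqP j j0) => // jlt.
      have : j0.+1 * e <= j * e by rewrite leq_mul2r; lia.
      rewrite mulSn; lia.
    have jle : j * e <= j0 * e by rewrite leq_mul2r jj orbT.
    exists (j0 - j); split; first by rewrite mulnBl; lia.
    by move=> i' Hi'; apply: Ha; lia.
have Dc : forall i i', U (a + i * e) -> i' <= i -> U (a + i' * e).
  move=> i i' /C [i2 [Hi2 H]] Hi'; apply: H.
  have : i * e = i2 * e by lia.
  by move/eqP; rewrite eqn_pmul2r // => /eqP <-.
case: (classic (exists L, forall i, U (a + i * e) -> i <= L)) => [bd|nbd].
- have [L [UL HL]] := ex_max_nat (I := fun i => U (a + i * e)) ltac:(by rewrite /= mul0n addn0) bd.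
  exists a; left; exists L => m; split.
  + by move=> /C [i [-> Hi]]; exists i => //; apply: HL; apply: Hi.
  + by move=> [i Hi ->]; apply: Dc UL Hi.
- exists a; right => m; split.
  + by move=> /C [i [-> _]]; exists i.
  + move=> [i ->]; apply: NNPP => ni; apply: nbd; exists i => i' Ui'.
    case: (leqP i' i) => // lt; exfalso; apply: ni; apply: Dc Ui' _; lia.
Qed.

Import Order.TTheory GRing.Theory Num.Theory.
Local Open Scope ring_scope.

Definition val (r : rat) (s : seq nat) : rat := (\sum_(k <- s) r ^+ k)%R.

Lemma val_nil r : val r [::] = 0%R. Proof. by rewrite /val big_nil. Qed.
Lemma val_cons r x s : val r (x :: s) = (r ^+ x + val r s)%R. Proof. by rewrite /val big_cons. Qed.
Lemma val_cat r s t : val r (s ++ t) = (val r s + val r t)%R. Proof. by rewrite /val big_cat. Qed.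

Lemma val_gt0 r s : (0 < r)%R -> s != [::] -> (0 < val r s)%R.
Proof.
move=> r0; case: s => [|x s] // _; rewrite val_cons.
have : (0 <= val r s)%R by apply: sumr_ge0 => i _; apply: exprn_ge0; apply: ltW.
by have := exprn_gt0 x r0; move=> a b; apply: ltr_wpDr.
Qed.

Lemma val_ge0 r s : (0 < r)%R -> (0 <= val r s)%R.
Proof. by move=> r0; apply: sumr_ge0 => i _; apply: exprn_ge0; apply: ltW. Qed.

Lemma val_shift r t s : val r (map (addn t) s) = (r ^+ t * val r s)%R.
Proof. by rewrite /val big_map mulr_sumr; apply: eq_bigr => i _; rewrite exprD. Qed.

Lemma val_V r n d M s : r = (n%:R / d%:R)%R -> (0 < d)%N -> all (fun x => (x <= M)%N) s ->
  (val r s * d%:R ^+ M)%R = (V n d M s)%:R.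
Proof.
move=> -> d0; elim: s => [|x s IH]; first by rewrite val_nil V_nil mul0r.
move=> /= /andP [xM /IH {}IH]; rewrite val_cons V_cons mulrDl IH natrD; congr (_ + _)%R.
rewrite -(subnKC xM) exprD expr_div_n mulrA divfK; last by rewrite expf_neq0 // pnatr_eq0 -lt0n.
by rewrite natrM !natrX addKn.
Qed.

Lemma val_eq r n d M u v : r = (n%:R / d%:R)%R -> (0 < d)%N ->
  all (fun x => (x <= M)%N) u -> all (fun x => (x <= M)%N) v ->
  (val r u = val r v <-> V n d M u = V n d M v).
Proof.
move=> rE d0 hu hv; have dM : (d%:R ^+ M != 0 :> rat) by rewrite expf_neq0 // pnatr_eq0 -lt0n.
split=> E.
- by apply/eqP; rewrite -(eqr_nat rat) -(val_V rE d0 hu) -(val_V rE d0 hv) E.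
- by apply: (mulIf dM); rewrite (val_V rE d0 hu) (val_V rE d0 hv) E.
Qed.

Lemma seq_max (s : seq nat) : exists M, all (fun x => (x <= M)%N) s.
Proof.
elim: s => [|x s [M HM]]; first by exists 0.
exists (maxn x M); rewrite /= leq_maxl /=; apply/allP => y /(allP HM) yM.
by rewrite (leq_trans yM) // leq_maxr.
Qed.

Lemma atom_pow r N a : 0 < r -> atom (expPuiseux r N) a -> exists k, N k /\ a = r ^+ k.
Proof.
move=> r0 [[s [sN ->]] a0 Ha]; case: s sN a0 Ha => [|x s] sN; first by rewrite big_nil eqxx.
move=> _ Ha; exists x; split; first by apply: sN; rewrite mem_head.
case: (eqVneq s [::]) => [->|sn0]; first by rewrite big_cons big_nil addr0.
have Hb : expPuiseux r N (r ^+ x).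
  exists [:: x]; split; last by rewrite big_cons big_nil addr0.
  by move=> k; rewrite mem_seq1 => /eqP ->; apply: sN; rewrite mem_head.
have Hc : expPuiseux r N (\sum_(k <- s) r ^+ k).
  by exists s; split => // k ks; apply: sN; rewrite in_cons ks orbT.
have [H|H] := Ha _ _ Hb Hc (big_cons _ _ _ _ _ _).
- by move: H; have := exprn_gt0 x r0; rewrite lt0r => /andP [/eqP].
- by move: H; have := val_gt0 r0 sn0; rewrite /val lt0r => /andP [/eqP].
Qed.

Lemma atoms_list r N (s : seq rat) : 0 < r -> (forall a, a \in s -> atom (expPuiseux r N) a) ->
  exists u : seq nat, (forall x, x \in u -> N x) /\ s = map (fun k => r ^+ k) u.
Proof.
move=> r0; elim: s => [|a s IH] H; first by exists [::].
have [k [Nk ->]] := atom_pow r0 (H a (mem_head _ _)).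
have [u [uN ->]] := IH (fun b bs => H b ltac:(by rewrite in_cons bs orbT)).
exists (k :: u); split => // x; rewrite in_cons => /orP [/eqP ->|] //; apply: uN.
Qed.

Lemma sum_map_pow r (u : seq nat) : \sum_(a <- map (fun k => r ^+ k) u) a = val r u.
Proof. by rewrite big_map. Qed.

Lemma pow_atom r N n d k : r = n%:R / d%:R -> (1 < n)%N -> (1 < d)%N -> coprime n d -> N k ->
  atom (expPuiseux r N) (r ^+ k).
Proof.
move=> rE n1 d1 cnd Nk.
have r0 : 0 < r by rewrite rE divr_gt0 // ltr0n; lia.
split.
- by exists [:: k]; split; [move=> x; rewrite mem_seq1 => /eqP -> | rewrite big_cons big_nil addr0].
- by rewrite expf_neq0 // lt0r_neq0.
move=> b c [be [beN ->]] [ga [gaN ->]] E.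
case: (eqVneq be [::]) => [->|ben]; first by left; rewrite big_nil.
case: (eqVneq ga [::]) => [->|gan]; first by right; rewrite big_nil.
exfalso.
have [M HM] := seq_max (k :: be ++ ga).
move: HM => /= /andP [kM HM].
have E' : val r (be ++ ga) = val r [:: k] by rewrite val_cat val_cons val_nil addr0 /val E.
have d0 : (0 < d)%N by lia.
move/(val_eq rE d0 HM (ltac:(by rewrite /= kM) : all (fun x => (x <= M)%N) [:: k])): E' => E'.
have rv : rng 0 M (be ++ ga) by apply/allP => x /(allP HM) xM; rewrite leq0n.
have := atom_nat n1 d1 cnd kM rv E'.
move/(congr1 size); rewrite size_cat /=.
by case: (be) ben => [|? ?] //; case: (ga) gan => [|? ?] //= _ _; lia.
Qed.

Lemma RR_RS e (P : seq nat -> Prop) (Q : nat -> Prop) x z :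
  (forall w, P w -> Q (size w)) -> RR e P x z -> RS e Q x z.
Proof.
move=> PQ [[j [Hj H]]|[j [Hj H]]]; [left|right]; exists j; split=> // i /H [w [Pw <-]];
  exact: PQ.
Qed.

Lemma Uk_exp r N n d k m : r = n%:R / d%:R -> (1 < n)%N -> (1 < d)%N -> coprime n d ->
  Uk (expPuiseux r N) k m <-> (0 < m)%N /\ exists u v : seq nat,
    [/\ size u = k, size v = m, (forall x, x \in u -> N x), (forall x, x \in v -> N x)
      & val r u = val r v].
Proof.
move=> rE n1 d1 cnd.
have r0 : 0 < r by rewrite rE divr_gt0 // ltr0n; lia.
split.
- move=> [m0 [s [t [ss st sa ta E]]]]; split=> //.
  have [u [uN us]] := atoms_list r0 sa.
  have [v [vN vt]] := atoms_list r0 ta.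
  exists u, v; split => //; rewrite -?ss -?st ?us ?vt ?size_map //.
  by rewrite -!sum_map_pow -us -vt.
- move=> [m0 [u [v [su sv uN vN E]]]]; split=> //.
  exists (map (fun k => r ^+ k) u), (map (fun k => r ^+ k) v); split.
  + by rewrite size_map.
  + by rewrite size_map.
  + by move=> a /mapP [x xu ->]; apply: pow_atom rE n1 d1 cnd (uN x xu).
  + by move=> a /mapP [x xv ->]; apply: pow_atom rE n1 d1 cnd (vN x xv).
  + by rewrite !sum_map_pow.
Qed.

Lemma main_case r N n d k e : r = n%:R / d%:R -> (1 < n)%N -> (1 < d)%N -> coprime n d ->
  numerical_monoid N -> (0 < k)%N ->
  (forall x y, x + n = y + d -> x = y + e \/ y = x + e)%N ->
  arith_seq (Uk (expPuiseux r N) k) e.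
Proof.
move=> rE n1 d1 cnd [N0 _ [B HB]] k0 He.
have d0 : (0 < d)%N by lia.
have n0 : (0 < n)%N by lia.
apply: arith_of.
  apply/(Uk_exp N k k rE n1 d1 cnd); split=> //; exists (nseq k 0%N), (nseq k 0%N).
  by split; rewrite ?size_nseq // => x /nseqP [-> _].
move=> m /(Uk_exp N k m rE n1 d1 cnd) [m0 [u [v [su sv uN vN E]]]].
have [M HM] := seq_max (u ++ v).
set u' := map (addn B) u; set v' := map (addn B) v.
have rng' : forall s, all (fun x => (x <= M)%N) s -> rng B (B + M) (map (addn B) s).
  move=> s hs; apply/allP => y /mapP [x xs ->]; rewrite leq_addr /= leq_add2l.
  exact: (allP hs).
move: HM; rewrite all_cat => /andP [hu hv].
have ru := rng' u hu; have rv := rng' v hv.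
have bnd : forall s, rng B (B + M) s -> all (fun x => (x <= B + M)%N) s.
  by move=> s /allP hs; apply/allP => x /hs /andP [].
have E' : V n d (B + M) u' = V n d (B + M) v'.
  apply/(val_eq rE d0 (bnd _ ru) (bnd _ rv)).
  by rewrite !val_shift E.
have := core n0 d0 cnd He ru rv E'.
rewrite !size_map su sv => H; apply: (RR_RS _ H) => w [rw Vw].
apply/(Uk_exp N k _ rE n1 d1 cnd); split.
  case: (w) Vw => [|? ?] // Vw.
  have : u' = [::] by apply: (V_eq0 (M := B + M) n0 d0); rewrite -Vw V_nil.
  by move/(congr1 size); rewrite size_map su => k0'; move: k0; rewrite -k0'.
exists u', w; split=> //.
- by rewrite size_map.
- by move=> x /mapP [y _ ->]; apply: HB; rewrite leq_addr.
- by move=> x /(allP rw) /andP [Bx _]; apply: HB.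
- by apply/(val_eq rE d0 (bnd _ ru) (bnd _ rw)).
Qed.

Lemma val_nseq r c J : val r (nseq c J) = c%:R * r ^+ J.
Proof.
elim: c => [|c IH]; first by rewrite val_nil mul0r.
by rewrite /= val_cons IH mulrSr mulrDl mul1r addrC.
Qed.

Lemma val_nat r n s : r = n%:R -> val r s = (\sum_(k <- s) n ^ k)%N%:R.
Proof. by move=> ->; rewrite natr_sum /val; apply: eq_bigr => i _; rewrite natrX. Qed.

Lemma int_case r N n k : r = n%:R -> (0 < n)%N -> numerical_monoid N -> (0 < k)%N ->
  forall m, Uk (expPuiseux r N) k m <-> m = k.
Proof.
move=> rE n0 [N0 _ _] k0.
have inS : forall c : nat, expPuiseux r N c%:R.
  move=> c; exists (nseq c 0%N); split; first by move=> x /nseqP [-> _].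
  by rewrite -/(val r _) val_nseq expr0 mulr1.
have Snat : forall x, expPuiseux r N x -> exists p : nat, x = p%:R.
  by move=> x [s [_ ->]]; exists (\sum_(k <- s) n ^ k)%N; rewrite -/(val r _) (val_nat _ rE).
have at1 : forall a, atom (expPuiseux r N) a -> a = 1.
  move=> a [aS a0 Hd]; have [p pE] := Snat a aS; subst a.
  have p0 : (0 < p)%N by move: a0; rewrite pnatr_eq0 lt0n.
  have := Hd 1 (p.-1)%:R (inS 1%N) (inS p.-1) ltac:(by rewrite addrC natr1 prednK).
  case=> [/eqP|/eqP]; first by rewrite oner_eq0.
  by rewrite pnatr_eq0 => /eqP p1; rewrite -(prednK p0) p1.
have atom1 : atom (expPuiseux r N) 1.
  split; [exact: (inS 1%N) | exact: oner_neq0 |].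
  move=> b c /Snat [p ->] /Snat [q ->]; rewrite -natrD => /eqP.
  rewrite -[X in X == _]/(1%:R) eqr_nat => /eqP pq.
  by case: p pq => [|p] pq; [left | right; have -> : q = 0%N by lia].
have sum1 : forall s : seq rat, (forall a, a \in s -> atom (expPuiseux r N) a) ->
    \sum_(a <- s) a = (size s)%:R.
  elim=> [|a s IH] H; first by rewrite big_nil.
  rewrite big_cons (at1 a (H a (mem_head a s))) IH; last first.
    by move=> b bs; apply: H; rewrite in_cons bs orbT.
  by change (size (a :: s)) with (size s).+1; rewrite mulrS.
move=> m; split.
- move=> [m0 [s [t [ss st sa ta E]]]].
  move: E; rewrite (sum1 _ sa) (sum1 _ ta) => /eqP; rewrite eqr_nat => /eqP.
  by rewrite ss st.
- move=> ->; split=> //; exists (nseq k 1), (nseq k 1); split; rewrite ?size_nseq //.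
  + by move=> a /nseqP [-> _].
  + by move=> a /nseqP [-> _].
Qed.

Lemma one_case r N d : r = 1 / d%:R -> (1 < d)%N -> numerical_monoid N ->
  ~ atomic (expPuiseux r N).
Proof.
move=> rE d1 [N0 _ [B HB]] At.
have r0 : 0 < r by rewrite rE divr_gt0 // ltr0n; lia.
have S1 : expPuiseux r N 1 by exists [:: 0%N]; split; [move=> x; rewrite mem_seq1 => /eqP -> | rewrite big_cons big_nil addr0].
have [s [sa sE]] := At 1 S1 (oner_neq0 _).
case: s sa sE => [|a s] sa sE; first by move: sE; rewrite big_nil; move/eqP; rewrite oner_eq0.
have Ha := sa a (mem_head _ _).
have [j [Nj aE]] := atom_pow r0 Ha.
move: Ha => [_ a0 Hd].
set J := maxn B j.+1.
have NJ : N J by apply: HB; rewrite leq_maxl.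
have jJ : (j < J)%N by rewrite leq_maxr.
set D := (d ^ (J - j))%N.
have D1 : (1 < D)%N by rewrite /D -[1%N](expn0 d) ltn_exp2l // subn_gt0.
have Sb : expPuiseux r N (r ^+ J).
  by exists [:: J]; split; [move=> x; rewrite mem_seq1 => /eqP -> | rewrite big_cons big_nil addr0].
have Sc : expPuiseux r N ((D.-1)%:R * r ^+ J).
  by exists (nseq D.-1 J); split; [move=> x /nseqP [-> _] | rewrite -/(val r _) val_nseq].
have E : a = r ^+ J + (D.-1)%:R * r ^+ J.
  rewrite -{1}[r ^+ J]mul1r -mulrDl [1 + _]addrC natr1 prednK; last lia.
  rewrite aE /D -(subnKC (ltnW jJ)) exprD mulrCA natrX addKn -exprMn.
  have -> : (d%:R * r = 1) by rewrite rE mul1r divff // pnatr_eq0; lia.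
  by rewrite expr1n mulr1.
have [H|H] := Hd _ _ Sb Sc E.
- by move: H; apply/eqP; rewrite expf_neq0 // lt0r_neq0.
- move: H; apply/eqP; apply: mulf_neq0; last by rewrite expf_neq0 // lt0r_neq0.
  rewrite pnatr_eq0; lia.
Qed.

Theorem mainTheorem4 (r : rat) (N : nat -> Prop) :
  0 < r -> numerical_monoid N -> atomic (expPuiseux r N) ->
  forall k : nat, (0 < k)%N ->
    arith_seq (Uk (expPuiseux r N) k) (absz (numq r - denq r)).
Proof.
move=> r0 NM At k k0.
set n := `|numq r|%N; set d := `|denq r|%N.
have Hn : numq r = n%:Z by rewrite /n gez0_abs // ltW // numq_gt0.
have Hd : denq r = d%:Z by rewrite /d gez0_abs // ltW // denq_gt0.
have rE : r = n%:R / d%:R by rewrite -{1}[r]divq_num_den Hn Hd.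
have cnd : coprime n d := coprime_num_den r.
have n0 : (0 < n)%N by rewrite /n absz_gt0 -numq_gt0 in r0 *; rewrite lt0r_neq0.
have d0 : (0 < d)%N by rewrite /d absz_gt0 lt0r_neq0 // denq_gt0.
rewrite Hn Hd.
case: (ltnP 1 d) => d1; last first.
  have d1' : d = 1%N by lia.
  have rE' : r = n%:R by rewrite rE d1' divr1.
  exists k; left; exists 0%N => m; rewrite (int_case rE' n0 NM k0); split.
  - by move=> ->; exists 0%N; rewrite ?mul0n ?addn0.
  - by move=> [i]; rewrite leqn0 => /eqP -> ->; rewrite mul0n addn0.
case: (ltnP 1 n) => n1; last first.
  have n1' : n = 1%N by lia.
  by exfalso; apply: (one_case (r := r) (d := d) _ d1 NM At); rewrite rE n1'.
apply: (main_case rE n1 d1 cnd NM k0) => x y E.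
case: (leqP d n) => dn.
- by rewrite distnEl //; lia.
- by rewrite distnEr; lia.
Qed.
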